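(* Let $a_n = \left(\frac23\right)^n p_n\!\left(\frac14\right)$ for $n\ge0$. Then $a_0=1$ and for all $n\ge 0$, \[ 3a_{n+1} = 2a_n + \sum_{k=0}^n\binom{n+1}{k}a_k + 3. \]
   Context: Define polynomial sequences $(p_k(x))_{k\ge -1}$ and $(q_k(x))_{k\ge -1}$ by $p_{-1}(x)=0$, $q_{-1}(x)=1$ and, for $k\ge -1$, $p_{k+1}(x) = 2(kx+1)p_k(x) + 2x(1-x)p_k'(x) + q_k(x)$, $q_{k+1}(x) = (2(k+1)x+1)q_k(x) + 2x(1-x)q_k'(x)$. *)

(* Defs.v *)
From HB Require Import structures.
From mathcomp Require Import all_boot all_order all_algebra.
Set Implicit Arguments. Unset Strict Implicit. Unset Printing Implicit Defensive.
Import Order.TTheory GRing.Theory Num.Theory.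
Local Open Scope ring_scope.

(* The paper's sequences (p_k, q_k)_{k >= -1} are indexed from -1.
   We store them shifted by one: pq_shift m = (p_{m-1}, q_{m-1}). *)
Fixpoint pq_shift (m : nat) : {poly rat} * {poly rat} :=
  match m with
  | 0 => (0, 1)
  | m'.+1 =>
      let pk := (pq_shift m').1 in
      let qk := (pq_shift m').2 in
      let k : int := (m'%:Z - 1)%R in
      ((2%:P * (k%:~R *: 'X + 1) * pk + 2%:P * 'X * (1 - 'X) * pk^`() + qk),
       (((2 * m'%:R : rat) *: 'X + 1) * qk + 2%:P * 'X * (1 - 'X) * qk^`()))
  end.

Definition p (n : nat) : {poly rat} := (pq_shift n.+1).1.
Definition q (n : nat) : {poly rat} := (pq_shift n.+1).2.

Definition a (n : nat) : rat := (2 / 3) ^+ n * (p n).[1 / 4].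

(* Main.v *)
Require Import Defs.
From HB Require Import structures.
From mathcomp Require Import all_boot all_order all_algebra.
From mathcomp Require Import ring.
Import Order.TTheory GRing.Theory Num.Theory.
Local Open Scope ring_scope.

Definition Dop (f : {poly rat}) : {poly rat} := 2%:P * 'X * (1 - 'X) * f^`().
Definition rr n := (pq_shift n).2.
Definition ss n := (pq_shift n).1.
Definition ww : {poly rat} := 1 - 'X.
Definition cc j : {poly rat} := (2%:P * ww) ^+ j.

Lemma DopD f g : Dop (f + g) = Dop f + Dop g.
Proof. by rewrite /Dop derivD mulrDr. Qed.
Lemma DopB f g : Dop (f - g) = Dop f - Dop g.
Proof. by rewrite /Dop derivB mulrBr. Qed.
Lemma DopM f g : Dop (f * g) = Dop f * g + f * Dop g.
Proof. rewrite /Dop derivM; ring. Qed.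
Lemma DopX : Dop 'X = 2%:P * 'X * (1 - 'X).
Proof. by rewrite /Dop derivX mulr1. Qed.
Lemma DopC c : Dop c%:P = 0.
Proof. by rewrite /Dop derivC mulr0. Qed.
Lemma Dop1 : Dop 1 = 0.
Proof. exact: (DopC 1). Qed.
Lemma Dopn k : Dop k%:R = 0.
Proof. by rewrite -polyC_natr DopC. Qed.
Lemma Dop0 : Dop 0 = 0.
Proof. exact: (DopC 0). Qed.
Lemma Dop_sum n (F : 'I_n -> {poly rat}) : Dop (\sum_(i < n) F i) = \sum_(i < n) Dop (F i).
Proof.
elim/big_rec2: _ => [|i y1 y2 _ <-]; first exact: Dop0.
by rewrite DopD.
Qed.

Lemma Dop_cc j : Dop (cc j) = - (2 * j%:R * 'X) * cc j.
Proof.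
rewrite /Dop /cc deriv_exp.
case: j => [|j] /=; first by rewrite !mulr0n mulr0 !mulr0 mul0r oppr0 mul0r.
rewrite exprS /ww !derivE -mulr_natr.
rewrite ?polyC_natr.
ring.
Qed.

Lemma Dop_r m : Dop (rr m) = rr m.+1 - (2 * m%:R * 'X + 1) * rr m.
Proof.
rewrite /rr /= /Dop -mul_polyC rmorphM /= polyC_natr polyC_natr; ring.
Qed.

Lemma Dop_s m : Dop (ss m) = ss m.+1 - (2 * (m%:R - 1) * 'X + 2) * ss m - rr m.
Proof.
rewrite /ss /rr /= /Dop -mul_polyC intrB /= -polyC_natr rmorphB /= polyC_natr.
rewrite ?polyC_natr.
ring.
Qed.

Definition Cv (f : nat -> {poly rat}) n :=
  \sum_(k < n.+1) 'C(n, k)%:R * cc (n - k) * f k.+1.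
Definition Bv (f : nat -> {poly rat}) n :=
  \sum_(k < n.+1) 'C(n, k)%:R * cc (n - k) * f k.+2.

Lemma pascal (F : nat -> {poly rat}) n :
  \sum_(k < n.+2) 'C(n.+1, k)%:R * F k =
  \sum_(k < n.+1) 'C(n, k)%:R * F k + \sum_(k < n.+1) 'C(n, k)%:R * F k.+1.
Proof.
have E : \sum_(k < n.+1) 'C(n, k)%:R * F k = \sum_(k < n.+2) 'C(n, k)%:R * F k.
  by rewrite [RHS]big_ord_recr /= bin_small // mul0r addr0.
rewrite E big_ord_recl [\sum_(k < n.+2) _]big_ord_recl !bin0 -addrA; congr (_ + _).
rewrite -big_split /=; apply: eq_bigr => i _.
by rewrite /bump /= binS natrD mulrDl addrC.
Qed.

Lemma Cv_succ f n : Cv f n.+1 = 2%:P * ww * Cv f n + Bv f n.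
Proof.
rewrite /Cv /Bv; under eq_bigr => i _ do rewrite -mulrA.
rewrite (pascal (fun k => cc (n.+1 - k) * f k.+1)) mulr_sumr.
congr (_ + _); apply: eq_bigr => i _.
  rewrite subSn; last by rewrite -ltnS.
  rewrite /cc exprS; ring.
by rewrite subSS !mulrA.
Qed.

Lemma Dop_Cv f n : Dop (Cv f n) =
  \sum_(k < n.+1) 'C(n, k)%:R * cc (n - k) * (Dop (f k.+1) - 2 * (n - k)%:R * 'X * f k.+1).
Proof.
rewrite /Cv Dop_sum; apply: eq_bigr => i _.
rewrite !DopM Dopn Dop_cc; ring.
Qed.

Lemma Dop_Cv_r n : Dop (Cv rr n) = Bv rr n - (2 * (n.+1)%:R * 'X + 1) * Cv rr n.
Proof.
rewrite Dop_Cv /Bv /Cv mulr_sumr -sumrB; apply: eq_bigr => i _.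
rewrite Dop_r.
have -> : (n.+1)%:R = (n - i)%:R + (i.+1)%:R :> {poly rat}.
  by rewrite -natrD addnS subnK // -ltnS.
ring.
Qed.

Lemma Dop_Cv_s n : Dop (Cv ss n) = Bv ss n - (2 * n%:R * 'X + 2) * Cv ss n - Cv rr n.
Proof.
rewrite Dop_Cv /Bv /Cv mulr_sumr -!sumrB; apply: eq_bigr => i _.
rewrite Dop_s.
have -> : n%:R = (n - i)%:R + i%:R :> {poly rat}.
  by rewrite -natrD subnK // -ltnS.
rewrite !mulrSr; ring.
Qed.

Definition hh n := rr n.+1 - 'X * Cv rr n - ww * rr n.
Definition gg n := ss n.+1 - 'X * Cv ss n - ww * ss n - ww * cc n.

Lemma Dop_ww : Dop ww = - (2%:P * 'X * (1 - 'X)).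
Proof. by rewrite /ww DopB Dop1 DopX sub0r. Qed.

Lemma hh_step n : hh n.+1 = (2 * (n.+1)%:R * 'X + 1) * hh n + Dop (hh n).
Proof.
rewrite /hh !DopB !DopM Dop_Cv_r Dop_ww DopX !Dop_r Cv_succ /ww ?polyC_natr.
ring.
Qed.

Lemma gg_step n : gg n.+1 = (2 * n%:R * 'X + 2) * gg n + Dop (gg n) + hh n.
Proof.
rewrite /gg /hh !DopB !DopM Dop_Cv_s Dop_ww DopX !Dop_s Dop_cc Cv_succ /cc exprS /ww ?polyC_natr.
rewrite !mulrSr; ring.
Qed.

Lemma rr0 : rr 0 = 1. Proof. by []. Qed.
Lemma ss0 : ss 0 = 0. Proof. by []. Qed.
Lemma rr1 : rr 1 = 1.
Proof.
have := Dop_r 0; rewrite rr0 Dop1 mulr0 mul0r add0r mulr1 => /eqP.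
by rewrite eq_sym subr_eq0 => /eqP.
Qed.
Lemma ss1 : ss 1 = 1.
Proof.
have := Dop_s 0; rewrite ss0 Dop0 rr0 mulr0 subr0 => /eqP.
by rewrite eq_sym subr_eq0 => /eqP.
Qed.

Lemma hh0 n : hh n = 0.
Proof.
elim: n => [|n IH].
  by rewrite /hh /Cv big_ord1 /= rr0 rr1 /cc /ww bin0 subnn expr0; ring.
by rewrite hh_step IH Dop0; ring.
Qed.

Lemma gg0 n : gg n = 0.
Proof.
elim: n => [|n IH].
  by rewrite /gg /Cv big_ord1 /= ss0 ss1 /cc /ww bin0 subnn expr0; ring.
by rewrite gg_step IH Dop0 hh0; ring.
Qed.
Lemma cc_val k : (cc k).[1/4] = (3/2)^+k.
Proof.
rewrite /cc horner_exp /ww hornerM hornerC hornerD hornerN hornerX hornerC.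
by congr (_ ^+ _).
Qed.

Theorem proposition3p4 :
  a 0 = 1 /\
  forall n : nat,
    3 * a n.+1 = 2 * a n + \sum_(0 <= k < n.+1) ('C(n.+1, k))%:R * a k + 3.
Proof.
split.
  by rewrite /a /p -/(ss 1) ss1 expr0 mul1r hornerC.
move=> n.
set t := fun k => (ss k.+1).[1/4].
have Ha k : a k = (2/3)^+k * t k by [].
have HC : (Cv ss n.+1).[1/4] = (3/2)^+(n.+1) * \sum_(k < n.+2) 'C(n.+1, k)%:R * a k.
  rewrite /Cv horner_sum mulr_sumr; apply: eq_bigr => i _.
  rewrite !hornerM cc_val Ha -polyC_natr hornerC -/(t i).
  have Hi : (i <= n.+1)%N by rewrite -ltnS.
  have -> : (3/2 : rat)^+n.+1 = (3/2)^+(n.+1 - i) * (3/2)^+i by rewrite -exprD subnK.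
  have H1 : (3/2 : rat)^+i * (2/3)^+i = 1.
    by rewrite -exprMn; have -> : (3/2 * (2/3) : rat) = 1 by []; rewrite expr1n.
  transitivity ('C(n.+1, i)%:R * (3 / 2) ^+ (n.+1 - i) * t i * ((3/2 : rat)^+i * (2/3)^+i)); first by rewrite H1 mulr1.
  ring.
have E := gg0 n.+1.
move: E => /(congr1 (fun q => q.[1/4])).
rewrite /gg [ss n.+2]lock [ss n.+1]lock [Cv ss n.+1]lock.
rewrite !hornerD !hornerN !hornerM cc_val /ww ?hornerD ?hornerN !hornerX ?hornerC -!lock HC.
rewrite big_mkord big_ord_recr /= binn mul1r.
rewrite -/(t n.+1) -/(t n) !Ha.
have Hv : (3/2 : rat)^+n.+1 = ((2/3)^+n.+1)^-1.
  by rewrite -exprVn.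
rewrite Hv !exprS.
set u := (2/3 : rat)^+n.
set S := \sum_(i < n.+1) _.
have u0 : u != 0 by rewrite expf_neq0.
set e := (X in X = 0 -> _) => E.
have key : (8/3) * u * e = 2 * u * t n.+1 - S - 2 * u * t n - 3.
  rewrite /e; field; by rewrite u0.
rewrite E mulr0 in key.
apply/eqP; rewrite -subr_eq0; apply/eqP.
by rewrite [RHS]key; field.
Qed.
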